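(* Let $C\in\mathcal C_n$ and $A=\Xi^{-1}(C)$, and for $i,j\in[n]$ put $L_{ij}=\sum_{k=1}^n kA_{i,j,k}$. Then every maximal chain in $(\mathcal C_n,\preceq)$ from the minimum element $M_n$ to $C$ has the same length $r(C)$, and $$r(C)=\frac{69n^5+180n^4+170n^3+60n^2+4^{1+(-1)^n}n}{480}-\sum_{1\le i,j\le n}(n-i+1)(n-j+1)(n-L_{ij}+1).$$
   Context: Let $[n]=\{1,\dots,n\}$, $[0,n]=\{0,\dots,n\}$. A corner-sum hypermatrix of order $n$ is an integer array $C=(C_{i,j,k})_{i,j,k\in[0,n]}$ such that for all $i,j\in[0,n]$: $C_{i,j,0}=C_{i,0,j}=C_{0,i,j}=0$, $C_{i,j,n}=C_{i,n,j}=C_{n,i,j}=ij$, and for all $k\in[n]$ each of $C_{i,j,k}-C_{i,j,k-1}$, $C_{i,k,j}-C_{i,k-1,j}$, $C_{k,i,j}-C_{k-1,i,j}$ is an integer in $\{\max(0,i+j-n),\dots,\min(i,j)\}$. $\mathcal C_n$ is the set of these, ordered by $C\preceq D$ iff $C\ge D$ entrywise; its minimum element is $M_n$ with $(M_n)_{i,j,k}=\min(k\min(i,j),\,ij-(n-k)\max(0,i+j-n))$. For an array $C$ indexed by $[0,n]^3$, $\Xi^{-1}(C)$ is the array indexed by $[n]^3$ with $\Xi^{-1}(C)_{i,j,k}=C_{i,j,k}-C_{i-1,j,k}-C_{i,j-1,k}-C_{i,j,k-1}+C_{i-1,j-1,k}+C_{i-1,j,k-1}+C_{i,j-1,k-1}-C_{i-1,j-1,k-1}$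 (the inverse of the corner-sum map $\Xi(A)_{i,j,k}=\sum_{a\le i,b\le j,c\le k}A_{a,b,c}$). *)

(* Defs.v *)
From mathcomp Require Import all_boot all_order all_algebra.
Set Implicit Arguments. Unset Strict Implicit. Unset Printing Implicit Defensive.
Import Order.TTheory GRing.Theory Num.Theory.
Local Open Scope ring_scope.

(* A three-dimensional integer array; only the entries indexed by [0,n]^3
   (resp. [n]^3) are meaningful, the others are ignored everywhere. *)
Definition hmat := nat -> nat -> nat -> int.

Definition is_csh (n : nat) (C : hmat) : Prop :=
  (forall i j : nat, (i <= n)%N -> (j <= n)%N ->
     [/\ C i j 0%N = 0, C i 0%N j = 0 & C 0%N i j = 0] /\
     [/\ C i j n = (i * j)%N%:Z, C i n j = (i * j)%N%:Z
       & C n i j = (i * j)%N%:Z]) /\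
  (forall i j k : nat, (i <= n)%N -> (j <= n)%N -> (1 <= k <= n)%N ->
     let lo := ((i + j) - n)%N%:Z in   (* = max(0, i+j-n) *)
     let hi := (minn i j)%:Z in
     [/\ lo <= C i j k - C i j k.-1 <= hi,
         lo <= C i k j - C i k.-1 j <= hi
       & lo <= C k i j - C k.-1 i j <= hi]).

Definition csh_le (n : nat) (C D : hmat) : Prop :=
  forall i j k : nat, (i <= n)%N -> (j <= n)%N -> (k <= n)%N -> D i j k <= C i j k.

Definition csh_lt (n : nat) (C D : hmat) : Prop := csh_le n C D /\ ~ csh_le n D C.

Definition csh_eq (n : nat) (C D : hmat) : Prop := csh_le n C D /\ csh_le n D C.

Definition Mmin (n : nat) : hmat := fun i j k =>
  Num.min ((k * minn i j)%N%:Z) ((i * j)%N%:Z - ((n - k) * ((i + j) - n))%N%:Z).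

Definition maximal_chain (n : nat) (M C : hmat) (s : seq hmat) : Prop :=
  match s with
  | [::] => False
  | x :: t =>
      [/\ csh_eq n x M, csh_eq n (last x t) C,
          (forall m : nat, (m < size s)%N -> is_csh n (nth x s m)) &
          (forall m : nat, (m.+1 < size s)%N ->
             csh_lt n (nth x s m) (nth x s m.+1) /\
             ~ (exists z, is_csh n z /\ csh_lt n (nth x s m) z /\
                                      csh_lt n z (nth x s m.+1)))]
  end.

Definition chain_length (s : seq hmat) : nat := (size s).-1.

(* Xi^{-1}(C), meaningful for i,j,k in [n]. *)
Definition Xi_inv (C : hmat) : hmat := fun i j k =>
  C i j k - C i.-1 j k - C i j.-1 k - C i j k.-1
  + C i.-1 j.-1 k + C i.-1 j k.-1 + C i j.-1 k.-1 - C i.-1 j.-1 k.-1.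

Definition Lsum (n : nat) (A : hmat) (i j : nat) : int :=
  \sum_(1 <= k < n.+1) (k%:Z * A i j k).

Definition rank_formula (n : nat) (C : hmat) : rat :=
  let A := Xi_inv C in
  (69 * n%:Q ^+ 5 + 180 * n%:Q ^+ 4 + 170 * n%:Q ^+ 3 + 60 * n%:Q ^+ 2
     + (4 : rat) ^ (1 + (-1) ^+ n : int) * n%:Q) / 480
  - \sum_(1 <= i < n.+1) \sum_(1 <= j < n.+1)
      ((n%:Q - i%:Q + 1) * (n%:Q - j%:Q + 1) * (n%:Q - (Lsum n A i j)%:~R + 1)).

(* Main.v *)
Require Import Defs.
From mathcomp Require Import all_boot all_order all_algebra.
From mathcomp Require Import ring lra zify.
From Stdlib Require Import Classical.
Set Implicit Arguments. Unset Strict Implicit. Unset Printing Implicit Defensive.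
Import Order.TTheory GRing.Theory Num.Theory.
Local Open Scope ring_scope.

Lemma tele (f F : rat -> rat) (a b : nat) : (a <= b)%N ->
  (forall x, F (x + 1) - F x = f x) ->
  \sum_(a <= j < b) f j%:R = F b%:R - F a%:R.
Proof.
move=> ab HF; elim: b ab => [|b IH]; first by rewrite leqn0 => /eqP ->; rewrite big_geq // subrr.
rewrite leq_eqVlt => /orP [/eqP ->|]; first by rewrite big_geq // subrr.
rewrite ltnS => ab; rewrite big_nat_recr //= IH // -HF -natr1; ring.
Qed.

Lemma Mmin_sym12 n i j k : Mmin n i j k = Mmin n j i k.
Proof. by rewrite /Mmin (minnC i j) (mulnC i j) (addnC i j). Qed.

Lemma Mk1 n i j k : (i <= j)%N -> (i + j <= n)%N -> Mmin n i j k = (i * minn k j)%:Z.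
Proof.
move=> ij ijn; rewrite /Mmin; have -> : minn i j = i by lia.
have -> : (i + j - n = 0)%N by lia. rewrite muln0 subr0.
case: (leqP k j) => kj.
- rewrite min_l; last by rewrite lez_nat; nia.
  by congr Posz; lia.
- rewrite min_r; last by rewrite lez_nat; nia.
  congr Posz; lia.
Qed.

Lemma Mk2 n i j k : (i <= j <= n)%N -> (n < i + j)%N -> (k <= n - i)%N -> Mmin n i j k = (k * i)%:Z.
Proof.
move=> /andP[ij jn] ijn kn; rewrite /Mmin; have -> : minn i j = i by lia.
rewrite min_l //.
have -> : (i * j)%:Z - ((n - k) * (i + j - n))%N%:Z = ((i * j) - ((n - k) * (i + j - n)))%N%:Z.
  by rewrite subzn //; nia.
rewrite lez_nat. nia.
Qed.

Lemma Mk3 n i j k : (i <= j <= n)%N -> (n < i + j)%N -> (n - i < k <= n)%N ->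
  Mmin n i j k = (i * j)%:Z - ((n - k) * (i + j - n))%N%:Z.
Proof.
move=> /andP[ij jn] ijn /andP[kn1 kn]; rewrite /Mmin; have -> : minn i j = i by lia.
have -> : (i * j)%:Z - ((n - k) * (i + j - n))%N%:Z = ((i * j) - ((n - k) * (i + j - n)))%N%:Z.
  by rewrite subzn //; nia.
rewrite min_r //. rewrite lez_nat. nia.
Qed.

Definition Ap (n m J : rat) : rat := (m * J - m * J^+2 + 2 * n * m * J) / 2%:R.
Definition Bp (n m J : rat) : rat := (m * J + m^+2 * J - n * m^+2 + n^+2 * m) / 2%:R.

Definition Tf (n i j : nat) : rat :=
  if (minn i j + maxn i j <= n)%N then Ap n%:R (minn i j)%:R (maxn i j)%:R
  else Bp n%:R (minn i j)%:R (maxn i j)%:R.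

Lemma intrPosz (z : nat) : ((Posz z)%:~R : rat) = z%:R.
Proof. by []. Qed.

Lemma colsum_le n i j : (1 <= i)%N -> (i <= j <= n)%N ->
  \sum_(1 <= k < n.+1) ((Mmin n i j k)%:~R : rat) = Tf n i j.
Proof.
move=> i1 /andP[ij jn]; rewrite /Tf; have -> : minn i j = i by lia.
have -> : maxn i j = j by lia.
case: ifP => [/idP ijn | /negbT ijn]; last rewrite -ltnNge in ijn.
- rewrite (@big_cat_nat _ _ _ j.+1) //=.
  rewrite (eq_big_nat _ _ (F2 := fun k : nat => i%:R * k%:R)); last first.
    by move=> k /andP[_ kj]; rewrite Mk1 // intrPosz natrM; congr (_ * _%:R); lia.
  rewrite [X in _ + X](eq_big_nat _ _ (F2 := fun k : nat => i%:R * j%:R)); last first.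
    by move=> k /andP[jk _]; rewrite Mk1 // intrPosz natrM; congr (_ * _%:R); lia.
  rewrite (@tele _ (fun x => i%:R * x * (x - 1) / 2%:R)) //; last by move=> x; field.
  rewrite sumr_const_nat subSS -[_ *+ (n - j)]mulr_natr.
  rewrite /Ap -!natr1 natrB //; by field.
- rewrite (@big_cat_nat _ _ _ (n - i).+1) //=; try lia.
  rewrite (eq_big_nat _ _ (F2 := fun k : nat => k%:R * i%:R)); last first.
    by move=> k /andP[_ kj]; rewrite Mk2 ?intrPosz ?natrM //; lia.
  rewrite [X in _ + X](eq_big_nat _ _ (F2 := fun k : nat => i%:R * j%:R - (n%:R - k%:R) * (i%:R + j%:R - n%:R))); last first.
    move=> k /andP[jk kn]; rewrite Mk3 //; try lia.
    rewrite intrB !intrPosz !natrM !natrB //; try lia.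
    by rewrite natrD.
  rewrite (@tele (fun x => x * i%:R) (fun x => i%:R * x * (x - 1) / 2%:R)) //; last by move=> x; field.
  rewrite (@tele (fun x => i%:R * j%:R - (n%:R - x) * (i%:R + j%:R - n%:R)) (fun x => i%:R * j%:R * x - (i%:R + j%:R - n%:R) * (n%:R * x - x * (x - 1) / 2%:R))) //; last by move=> x; field.
  rewrite /Bp -!natr1 natrB //; [by field | lia].
  all: lia.
Qed.

Lemma Tf_sym n i j : Tf n i j = Tf n j i.
Proof. by rewrite /Tf minnC maxnC. Qed.

Lemma colsum n i j : (1 <= i <= n)%N -> (1 <= j <= n)%N ->
  \sum_(1 <= k < n.+1) ((Mmin n i j k)%:~R : rat) = Tf n i j.
Proof.
move=> /andP[i1 iN] /andP[j1 jN]; case: (leqP i j) => ij.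
  by apply: colsum_le => //; rewrite ij.
rewrite Tf_sym (eq_big_nat _ _ (F2 := fun k => (Mmin n j i k)%:~R)); last by move=> k _; rewrite Mmin_sym12.
by apply: colsum_le => //; apply/andP; split; [exact: ltnW | exact: iN].
Qed.

Lemma symsum (g : nat -> nat -> rat) N : (forall i j, g i j = g j i) ->
  \sum_(1 <= i < N.+1) \sum_(1 <= j < N.+1) g i j =
  \sum_(1 <= i < N.+1) (g i i + 2 * \sum_(i.+1 <= j < N.+1) g i j).
Proof.
move=> gs; elim: N => [|N IH]; first by rewrite !big_geq.
rewrite (big_nat_recr N.+1) //= [RHS](big_nat_recr N.+1) //= [\sum_(N.+2 <= _ < N.+2) _]big_geq // mulr0 addr0.
rewrite (eq_big_nat _ _ (F2 := fun i => \sum_(1 <= j < N.+1) g i j + g i N.+1)); last first.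
  by move=> i _; rewrite big_nat_recr.
rewrite [X in _ = X + _](eq_big_nat _ _ (F2 := fun i => (g i i + 2 * \sum_(i.+1 <= j < N.+1) g i j) + 2 * g i N.+1)); last first.
  by move=> i /andP[_ iN]; rewrite (big_nat_recr N.+1 i.+1) //= mulrDr addrA.
rewrite big_split /= IH [in RHS]big_split /= (big_nat_recr N.+1 1) //= -mulr_sumr.
rewrite (eq_big_nat _ _ (F1 := fun j => g N.+1 j) (F2 := fun j => g j N.+1)); last by move=> j _; rewrite gs.
ring.
Qed.

Definition FAp (n m J : rat) : rat :=
  (- 2 * m * J + 3 * m * J^+2 - m * J^+3 - 3 * n * m * J + 3 * n * m * J^+2) / 6%:R.
Definition FBp (n m J : rat) : rat :=
  (- m * J + m * J^+2 - m^+2 * J + m^+2 * J^+2 - 2 * n * m^+2 * J + 2 * n^+2 * m * J) / 4%:R.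
Definition W1p (n i : rat) : rat :=
  Ap n i i + 2 * (FAp n i (n - i + 1) - FAp n i (i + 1) + (FBp n i (n + 1) - FBp n i (n - i + 1))).
Definition W2p (n i : rat) : rat :=
  Bp n i i + 2 * (FBp n i (n + 1) - FBp n i (i + 1)).

Lemma rowsum n i : (1 <= i <= n)%N ->
  Tf n i i + 2 * \sum_(i.+1 <= j < n.+1) Tf n i j =
  if (i.*2 <= n)%N then W1p n%:R i%:R else W2p n%:R i%:R.
Proof.
move=> /andP[i1 iN].
have Tij j : (i < j)%N -> Tf n i j = if (i + j <= n)%N then Ap n%:R i%:R j%:R else Bp n%:R i%:R j%:R.
  move=> ij; rewrite /Tf; have -> : minn i j = i by lia.
  by have -> : maxn i j = j by lia.
have -> : Tf n i i = if (i + i <= n)%N then Ap n%:R i%:R i%:R else Bp n%:R i%:R i%:R.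
  by rewrite /Tf minnn maxnn.
case: ifP => [/idP i2 | /negbT i2].
- rewrite ifT; last by lia.
  rewrite (@big_cat_nat _ _ _ (n - i).+1) //=; try lia.
  rewrite (eq_big_nat _ _ (F2 := fun j : nat => Ap n%:R i%:R j%:R)); last first.
    by move=> j /andP[ij jn]; rewrite Tij ?ifT //; lia.
  rewrite [\sum_((n - i).+1 <= _ < n.+1) _](eq_big_nat _ _ (F2 := fun j : nat => Bp n%:R i%:R j%:R)); last first.
    by move=> j /andP[ij jn]; rewrite Tij ?ifF //; lia.
  rewrite (@tele (fun x => Ap n%:R i%:R x) (fun x => FAp n%:R i%:R x)); try lia; last first.
    by move=> x; rewrite /FAp /Ap; field.
  rewrite (@tele (fun x => Bp n%:R i%:R x) (fun x => FBp n%:R i%:R x)); try lia; last first.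
    by move=> x; rewrite /FBp /Bp; field.
  rewrite /W1p -!natr1 natrB //; lia.
- rewrite ifF; last by lia.
  rewrite (eq_big_nat _ _ (F2 := fun j : nat => Bp n%:R i%:R j%:R)); last first.
    by move=> j /andP[ij jn]; rewrite Tij ?ifF //; lia.
  rewrite (@tele (fun x => Bp n%:R i%:R x) (fun x => FBp n%:R i%:R x)); try lia; last first.
    by move=> x; rewrite /FBp /Bp; field.
  by rewrite /W2p -!natr1.
Qed.

Definition G1p (n i : rat) : rat :=
  (6 * i - 35 * i^+2 + 50 * i^+3 - 25 * i^+4 + 4 * i^+5 - 20 * n * i - 10 * n * i^+2
   + 60 * n * i^+3 - 30 * n * i^+4 - 60 * n^+2 * i + 60 * n^+2 * i^+2 - 40 * n^+3 * i
   + 40 * n^+3 * i^+2) / 120%:R.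
Definition G2p (n i : rat) : rat :=
  (2 * i - 15 * i^+2 + 10 * i^+3 + 15 * i^+4 - 12 * i^+5 - 30 * n * i + 60 * n * i^+2
   - 60 * n * i^+3 + 30 * n * i^+4 - 90 * n^+2 * i + 150 * n^+2 * i^+2 - 60 * n^+2 * i^+3
   - 60 * n^+3 * i + 60 * n^+3 * i^+2) / 120%:R.

Definition Pn (n : nat) : rat :=
  (69 * n%:Q ^+ 5 + 180 * n%:Q ^+ 4 + 170 * n%:Q ^+ 3 + 60 * n%:Q ^+ 2
     + (4 : rat) ^ (1 + (-1) ^+ n : int) * n%:Q) / 480.

Lemma sumM n : \sum_(1 <= i < n.+1) \sum_(1 <= j < n.+1) \sum_(1 <= k < n.+1)
   ((Mmin n i j k)%:~R : rat) = Pn n.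
Proof.
rewrite (eq_big_nat _ _ (F2 := fun i => \sum_(1 <= j < n.+1) Tf n i j)); last first.
  by move=> i Hi; apply: eq_big_nat => j Hj; apply: colsum; lia.
rewrite symsum; last exact: Tf_sym.
rewrite (eq_big_nat _ _ (F2 := fun i => if (i.*2 <= n)%N then W1p n%:R i%:R else W2p n%:R i%:R)); last first.
  by move=> i Hi; apply: rowsum; lia.
rewrite (@big_cat_nat _ _ _ (n./2).+1) //=; try lia.
rewrite (eq_big_nat _ _ (F2 := fun i => W1p n%:R i%:R)); last first.
  by move=> i Hi; rewrite ifT //; lia.
rewrite [\sum_((n./2).+1 <= _ < n.+1) _](eq_big_nat _ _ (F2 := fun i => W2p n%:R i%:R)); last first.
  by move=> i Hi; rewrite ifF //; lia.
rewrite (@tele (fun x => W1p n%:R x) (fun x => G1p n%:R x)); try lia; last first.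
  by move=> x; rewrite /G1p /W1p /FAp /FBp /Ap /Bp; field.
rewrite (@tele (fun x => W2p n%:R x) (fun x => G2p n%:R x)); try lia; last first.
  by move=> x; rewrite /G2p /W2p /FBp /Bp; field.
rewrite /Pn -signr_odd !intrPosz.
have := odd_double_half n; set h := n./2; clearbody h.
case: (odd n) => /= Hn; subst n.
- rewrite expr1 addrN expr0z.
  rewrite -!natr1 ?natrD -?muln2 ?natrM /G1p /G2p; by field.
- rewrite expr0 (_ : (4 : rat) ^ (1 + 1 : int) = 16); last by rewrite /exprz /=.
  rewrite -!natr1 ?natrD -?muln2 ?natrM /G1p /G2p; by field.
Qed.

Lemma abel1 (h : nat -> rat) n :
  \sum_(1 <= k < n.+1) k%:R * (h k - h k.-1) = n%:R * h n - \sum_(0 <= k < n) h k.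
Proof.
elim: n => [|n IH]; first by rewrite !big_geq // mul0r subr0.
rewrite big_nat_recr //= IH big_nat_recr //= -natr1; ring.
Qed.

Lemma abel2 (g : nat -> rat) n :
  \sum_(1 <= a < n.+1) (n%:R - a%:R + 1) * (g a - g a.-1) = \sum_(1 <= a < n.+1) g a - n%:R * g 0%N.
Proof.
elim: n => [|n IH]; first by rewrite !big_geq // mul0r subr0.
have tel : forall m, \sum_(1 <= a < m.+1) (g a - g a.-1) = g m - g 0%N.
  elim=> [|m IHm]; first by rewrite big_geq // subrr.
  by rewrite big_nat_recr //= IHm; ring.
rewrite big_nat_recr //=.
rewrite (eq_big_nat _ _ (F2 := fun a => (n%:R - a%:R + 1) * (g a - g a.-1) + (g a - g a.-1))); last first.
  by move=> a _; rewrite -natr1; ring.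
rewrite big_split /= IH tel [in RHS]big_nat_recr //= -!natr1; ring.
Qed.


Lemma intr_sum_nat (F : nat -> int) a b :
  ((\sum_(a <= k < b) F k)%:~R : rat) = \sum_(a <= k < b) ((F k)%:~R : rat).
Proof.
elim: b => [|b IH]; first by rewrite !big_geq.
case: (leqP a b) => ab; first by rewrite !big_nat_recr //= intrD IH.
by rewrite !big_geq.
Qed.

Lemma P3 n C : is_csh n C ->
  \sum_(1 <= i < n.+1) \sum_(1 <= j < n.+1)
      ((n%:Q - i%:Q + 1) * (n%:Q - j%:Q + 1) * (n%:Q - (Lsum n (Xi_inv C) i j)%:~R + 1))
  = \sum_(1 <= i < n.+1) \sum_(1 <= j < n.+1) \sum_(1 <= k < n.+1) ((C i j k)%:~R : rat).
Proof.
move=> [Hb _].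
pose c i j k : rat := (C i j k)%:~R.
have c0 i j : (i <= n)%N -> (j <= n)%N -> [/\ c i j 0%N = 0, c i 0%N j = 0 & c 0%N i j = 0].
  by move=> iN jN; have [[h1 h2 h3] _] := Hb i j iN jN; rewrite /c h1 h2 h3.
have cn i j : (i <= n)%N -> (j <= n)%N -> c i j n = i%:R * j%:R.
  by move=> iN jN; have [_ [h1 _ _]] := Hb i j iN jN; rewrite /c h1 intrPosz natrM.
pose H i j k := c i j k - c i.-1 j k - c i j.-1 k + c i.-1 j.-1 k.
have HL i j : ((Lsum n (Xi_inv C) i j)%:~R : rat) = n%:R * H i j n - \sum_(0 <= k < n) H i j k.
  rewrite /Lsum intr_sum_nat -abel1; apply: eq_big_nat => k _.
  by rewrite intrM intrPosz /Xi_inv !(intrD, intrB) /H /c; ring.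
have Hn i j : (1 <= i <= n)%N -> (1 <= j <= n)%N -> H i j n = 1.
  move=> /andP[i1 iN] /andP[j1 jN]; rewrite /H !cn; try lia.
  rewrite -(prednK i1) -(prednK j1) /= -!natr1; ring.
have H0 i j : (i <= n)%N -> (j <= n)%N -> H i j 0%N = 0.
  move=> iN jN; rewrite /H; have [-> _ _] := c0 i j iN jN.
  have [-> _ _] := c0 i.-1 j (leq_trans (leq_pred i) iN) jN.
  have [-> _ _] := c0 i j.-1 iN (leq_trans (leq_pred j) jN).
  have [-> _ _] := c0 i.-1 j.-1 (leq_trans (leq_pred i) iN) (leq_trans (leq_pred j) jN).
  by rewrite !subrr ?subr0 ?addr0.
have Hsum i j : (1 <= i <= n)%N -> (1 <= j <= n)%N ->
    n%:R - ((Lsum n (Xi_inv C) i j)%:~R : rat) + 1 = \sum_(1 <= k < n.+1) H i j k.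
  move=> Hi Hj; rewrite HL Hn // (big_ltn (m := 0%N)); last by lia.
  rewrite H0; try lia. rewrite add0r (big_nat_recr n 1); last by lia.
  by rewrite Hn //= mulr1; ring.
rewrite (eq_big_nat _ _ (F2 := fun i => \sum_(1 <= j < n.+1) \sum_(1 <= k < n.+1)
          (n%:R - i%:R + 1) * (n%:R - j%:R + 1) * H i j k)); last first.
  move=> i Hi; apply: eq_big_nat => j Hj; rewrite !intrPosz Hsum ?mulr_sumr //; lia.
rewrite (eq_big_nat _ _ (F2 := fun i => \sum_(1 <= k < n.+1) \sum_(1 <= j < n.+1)
          (n%:R - i%:R + 1) * (n%:R - j%:R + 1) * H i j k)); last first.
  by move=> i Hi; rewrite exchange_big_nat.
rewrite exchange_big_nat.
rewrite [RHS](eq_big_nat _ _ (F2 := fun i => \sum_(1 <= k < n.+1) \sum_(1 <= j < n.+1) c i j k)); last first.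
  by move=> i Hi; rewrite exchange_big_nat.
rewrite [RHS]exchange_big_nat; apply: eq_big_nat => k /andP[k1 kN].
rewrite ltnS in kN.
pose g i := \sum_(1 <= j < n.+1) c i j k.
have inner i : (1 <= i <= n)%N -> \sum_(1 <= j < n.+1) (n%:R - i%:R + 1) * (n%:R - j%:R + 1) * H i j k
    = (n%:R - i%:R + 1) * (g i - g i.-1).
  move=> /andP[i1 iN].
  pose G j := c i j k - c i.-1 j k.
  rewrite (eq_big_nat _ _ (F2 := fun j => (n%:R - i%:R + 1) * ((n%:R - j%:R + 1) * (G j - G j.-1)))); last first.
    by move=> j _; rewrite /H /G; ring.
  rewrite -mulr_sumr; congr (_ * _).
  rewrite abel2 /G /g.
  have [_ -> _] := c0 i k iN kN.
  have [_ -> _] := c0 i.-1 k (leq_trans (leq_pred i) iN) kN.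
  rewrite subrr mulr0 subr0 -sumrB; done.
rewrite (eq_big_nat _ _ (F2 := fun i => (n%:R - i%:R + 1) * (g i - g i.-1))); last first.
  by move=> i Hi; apply: inner; lia.
rewrite abel2.
have -> : g 0%N = 0.
  rewrite /g big1_seq //= => j; rewrite mem_index_iota => Hj.
  by have [_ _ ->] := c0 j k ltac:(lia) kN.
by rewrite mulr0 subr0.
Qed.

Definition min4 (a b c d : int) : int := Num.min (Num.min a b) (Num.min c d).

Lemma min4_le a b c d :
  [/\ min4 a b c d <= a, min4 a b c d <= b, min4 a b c d <= c & min4 a b c d <= d].
Proof. by rewrite /min4 !ge_min !lexx !orbT. Qed.

Lemma min4_mem a b c d :
  min4 a b c d = a \/ min4 a b c d = b \/ min4 a b c d = c \/ min4 a b c d = d.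
Proof.
rewrite /min4; case: (leP a b) => _; case: (leP c d) => _.
- by case: leP; tauto.
- by case: leP; tauto.
- by case: leP; tauto.
- by case: leP; tauto.
Qed.

Lemma min4_eq v a b c d : v <= a -> v <= b -> v <= c -> v <= d ->
  (v = a \/ v = b \/ v = c \/ v = d) -> min4 a b c d = v.
Proof.
move=> va vb vc vd vm; apply: le_anti; rewrite /min4 !le_min va vb vc vd !andbT.
have [h1 h2 h3 h4] := min4_le a b c d; rewrite /min4 in h1 h2 h3 h4.
by case: vm => [->|[->|[->|->]]]; rewrite ?h1 ?h2 ?h3 ?h4.
Qed.

Definition Qz (n i j k : nat) : int :=
  (i * j + j * k + k * i)%N%:Z - (n * (i + j + k))%N%:Z + (n * n)%N%:Z.
Definition Ms (n i j k : nat) : int := min4 (i * j)%N%:Z (j * k)%N%:Z (k * i)%N%:Z (Qz n i j k).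

Lemma Ms_sym12 n i j k : Ms n i j k = Ms n j i k.
Proof.
have eQ : Qz n j i k = Qz n i j k by rewrite /Qz; congr (_ - _ + _); congr Posz; nia.
rewrite /Ms eQ (mulnC j i) (mulnC i k) (mulnC k j).
have [h1 h2 h3 h4] := min4_le (i * j)%N%:Z (j * k)%N%:Z (k * i)%N%:Z (Qz n i j k).
have hm := min4_mem (i * j)%N%:Z (j * k)%N%:Z (k * i)%N%:Z (Qz n i j k).
symmetry; apply: min4_eq => //; tauto.
Qed.

Lemma Ms_sym13 n i j k : Ms n i j k = Ms n k j i.
Proof.
have eQ : Qz n k j i = Qz n i j k by rewrite /Qz; congr (_ - _ + _); congr Posz; nia.
rewrite /Ms eQ (mulnC k j) (mulnC j i) (mulnC i k).
have [h1 h2 h3 h4] := min4_le (i * j)%N%:Z (j * k)%N%:Z (k * i)%N%:Z (Qz n i j k).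
have hm := min4_mem (i * j)%N%:Z (j * k)%N%:Z (k * i)%N%:Z (Qz n i j k).
symmetry; apply: min4_eq => //; tauto.
Qed.

Ltac memtac := first [ by left; congr Posz; nia | by right; left; congr Posz; nia
  | by right; right; left; congr Posz; nia | by right; right; right; rewrite /Qz; nia ].
Ltac m4tac := apply: min4_eq; rewrite ?lez_nat; first [ nia | rewrite /Qz; nia | memtac ].

Lemma Mmin_Ms_le n i j k : (i <= j <= n)%N -> (k <= n)%N -> Mmin n i j k = Ms n i j k.
Proof.
move=> /andP[ij jN] kN; rewrite /Ms; symmetry.
case: (leqP (i + j) n) => ijn.
  rewrite Mk1 //; case: (leqP k j) => kj; m4tac.
case: (leqP k (n - i)) => kn.
  rewrite Mk2 //; last by rewrite ij jN.
  m4tac.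
rewrite Mk3 //; last (by rewrite kn kN); last by rewrite ij jN.
have -> : (i * j)%N%:Z - ((n - k) * (i + j - n))%N%:Z = Qz n i j k by rewrite /Qz; nia.
apply: min4_eq; rewrite /Qz ?lez_nat; first [ nia | by right; right; right ].
Qed.

Lemma Mmin_Ms n i j k : (i <= n)%N -> (j <= n)%N -> (k <= n)%N -> Mmin n i j k = Ms n i j k.
Proof.
move=> iN jN kN; case: (leqP i j) => ij.
  by apply: Mmin_Ms_le; rewrite ?ij.
by rewrite Mmin_sym12 Ms_sym12; apply: Mmin_Ms_le; rewrite ?iN // ltnW.
Qed.

Lemma Mmin_sym13 n i j k : (i <= n)%N -> (j <= n)%N -> (k <= n)%N -> Mmin n i j k = Mmin n k j i.
Proof. by move=> iN jN kN; rewrite !Mmin_Ms // Ms_sym13. Qed.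

Lemma Mmin_sym23 n i j k : (i <= n)%N -> (j <= n)%N -> (k <= n)%N -> Mmin n i j k = Mmin n i k j.
Proof.
move=> iN jN kN; rewrite Mmin_sym12 Mmin_sym13 // Mmin_sym12 //.
Qed.

Lemma minstep (a b l m : int) : l <= m ->
  l <= Num.min (a + m) (b + l) - Num.min a b <= m.
Proof.
move=> lm; case: (leP a b) => ab; case: (leP (a + m) (b + l)) => h; apply/andP; split; lia.
Qed.

Lemma Mmin_step n i j k : (i <= n)%N -> (j <= n)%N -> (1 <= k <= n)%N ->
  ((i + j) - n)%N%:Z <= Mmin n i j k - Mmin n i j k.-1 <= (minn i j)%:Z.
Proof.
move=> iN jN /andP[k1 kN].
have -> : Mmin n i j k = Num.min ((k.-1 * minn i j)%N%:Z + (minn i j)%:Z)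
     (((i * j)%N%:Z - ((n - k.-1) * (i + j - n))%N%:Z) + ((i + j) - n)%N%:Z).
  rewrite /Mmin; congr Num.min.
  - rewrite -PoszD; congr Posz; rewrite -{1}(prednK k1) mulSn; lia.
  - have -> : (n - k.-1 = (n - k).+1)%N by lia.
    rewrite mulSn; lia.
apply: minstep; rewrite lez_nat; lia.
Qed.

Lemma Mmin_csh n : is_csh n (Mmin n).
Proof.
have B0 i j : (i <= n)%N -> (j <= n)%N -> Mmin n i j 0%N = 0.
  by move=> iN jN; rewrite /Mmin min_l //; nia.
have Bn i j : (i <= n)%N -> (j <= n)%N -> Mmin n i j n = (i * j)%N%:Z.
  by move=> iN jN; rewrite /Mmin min_r //; rewrite subnn mul0n subr0 ?lez_nat; nia.
split.
  move=> i j iN jN; split; split.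
  - exact: B0.
  - by rewrite Mmin_sym23 // B0.
  - by rewrite Mmin_sym13 // B0.
  - exact: Bn.
  - by rewrite Mmin_sym23 // Bn.
  - by rewrite Mmin_sym13 // Bn // mulnC.
move=> i j k iN jN /andP[k1 kN] /=.
have k1N : (k.-1 <= n)%N by lia.
split.
- by apply: Mmin_step => //; rewrite k1.
- rewrite (@Mmin_sym23 n i k j) // (@Mmin_sym23 n i k.-1 j) //.
  by apply: Mmin_step => //; rewrite k1.
- rewrite (@Mmin_sym13 n k i j) // (@Mmin_sym13 n k.-1 i j) // (Mmin_sym12 n j i) (Mmin_sym12 n j i k.-1).
  by apply: Mmin_step => //; rewrite k1.
Qed.

Lemma csh_le_M n C : is_csh n C -> csh_le n (Mmin n) C.
Proof.
move=> [Hb Hd] i j k iN jN kN; rewrite /Mmin le_min; apply/andP; split.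
- elim: k kN => [|k IH] kN.
    by have [[-> _ _] _] := Hb i j iN jN.
  have [/andP[_ h] _ _] := Hd i j k.+1 iN jN ltac:(lia).
  have := IH ltac:(lia); move: h => /=; lia.
- have key : forall t, (t <= n)%N -> C i j (n - t)%N <= (i * j)%N%:Z - (t * (i + j - n))%N%:Z.
    elim=> [|t IH] tN.
      by rewrite subn0; have [_ [-> _ _]] := Hb i j iN jN; rewrite mul0n subr0.
    have [/andP[h _] _ _] := Hd i j (n - t)%N iN jN ltac:(lia).
    have e : ((n - t).-1 = n - t.+1)%N by lia.
    move: h; rewrite /= e => h; have := IH ltac:(lia); lia.
  have := key (n - k)%N ltac:(lia); have -> : (n - (n - k) = k)%N by lia.
  done.
Qed.

Lemma gen (n a b : nat) (x1 x0 y1 y0 w1 w0 : int) (e1 e0 : bool) :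
  ((a + b) - n)%N%:Z <= x1 - x0 <= (minn a b)%:Z ->
  ((a + b) - n)%N%:Z <= y1 - y0 <= (minn a b)%:Z ->
  y1 <= x1 -> y0 <= x0 ->
  w1 - w0 = (a * b)%N%:Z ->
  (e1 || e0 -> (0 < a < n)%N && (0 < b < n)%N) ->
  ~~ (e1 && e0) ->
  (e1 -> y1 < x1 /\ (y0 < x0 -> n%:Z * x0 - w0 <= n%:Z * x1 - w1)) ->
  (e0 -> y0 < x0 /\ (y1 < x1 -> n%:Z * x1 - w1 <= n%:Z * x0 - w0)) ->
  ((a + b) - n)%N%:Z <= (if e1 then x1 - 1 else x1) - (if e0 then x0 - 1 else x0) <= (minn a b)%:Z.
Proof.
move=> /andP[hx1 hx2] /andP[hy1 hy2] yx1 yx0 hw hint hne h1 h0.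
case: e1 hint hne h1; case: e0 h0 => //= h0 hint _ h1.
- have /andP[/andP[a0 an] /andP[b0 bn]] := hint isT.
  have [yx hm] := h1 isT.
  apply/andP; split; last by lia.
  case: (x1 - x0 =P ((a + b) - n)%N%:Z) => e; last by lia.
  have := hm ltac:(lia).
  have : (0 < (n - a) * (n - b))%N by nia.
  have : (0 < a * b)%N by nia.
  nia.
- have /andP[/andP[a0 an] /andP[b0 bn]] := hint isT.
  have [yx hm] := h0 isT.
  apply/andP; split; first by lia.
  case: (x1 - x0 =P (minn a b)%:Z) => e; last by lia.
  have := hm ltac:(lia).
  have : (a * b < n * minn a b)%N by case: (leqP a b) => ?; nia.
  nia.
- by apply/andP.
Qed.

Lemma exists_max (T : finType) (P : pred T) (f : T -> int) x0 :
  P x0 -> exists x, P x /\ forall y, P y -> f y <= f x.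
Proof. by move=> Px0; case: (arg_maxP f Px0) => x Px H; exists x; split => // y Py; exact: H. Qed.

Definition dec1 (x : hmat) (i j k : nat) : hmat :=
  fun a b c => if [&& a == i, b == j & c == k] then x a b c - 1 else x a b c.

Lemma exists_gt n x y : ~ csh_le n y x ->
  exists i j k, [/\ (i <= n)%N, (j <= n)%N, (k <= n)%N & y i j k < x i j k].
Proof.
move=> H; apply: NNPP => H2; apply: H => i j k iN jN kN.
case: (leP (x i j k) (y i j k)) => // h; exfalso; apply: H2; by exists i, j, k.
Qed.

Lemma exists_max_pt n x y : ~ csh_le n y x ->
  exists i j k, [/\ (i <= n)%N, (j <= n)%N, (k <= n)%N, y i j k < x i j k &
    forall a b c, (a <= n)%N -> (b <= n)%N -> (c <= n)%N -> y a b c < x a b c ->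
      n%:Z * x a b c - (a * b * c)%N%:Z <= n%:Z * x i j k - (i * j * k)%N%:Z].
Proof.
move=> /exists_gt [i [j [k [iN jN kN yx]]]].
pose T := ('I_n.+1 * 'I_n.+1 * 'I_n.+1)%type.
pose P := fun q : T => y q.1.1 q.1.2 q.2 < x q.1.1 q.1.2 q.2.
pose f := fun q : T => n%:Z * x q.1.1 q.1.2 q.2 - (q.1.1 * q.1.2 * q.2)%N%:Z.
have Px0 : P ((Ordinal (n:=n.+1) (m:=i) ltac:(lia), Ordinal (n:=n.+1) (m:=j) ltac:(lia)), Ordinal (n:=n.+1) (m:=k) ltac:(lia)).
  exact: yx.
have [[[pi pj] pk] [Pp Hm]] := exists_max f Px0.
exists pi, pj, pk; split => //; try (rewrite -ltnS; exact: ltn_ord).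
move=> a b c aN bN cN yabc.
have := Hm ((Ordinal (n:=n.+1) (m:=a) ltac:(lia), Ordinal (n:=n.+1) (m:=b) ltac:(lia)), Ordinal (n:=n.+1) (m:=c) ltac:(lia)) yabc.
by rewrite /f.
Qed.

Ltac eqs := move=> /and3P[/eqP ? /eqP ? /eqP ?]; subst.

Lemma step n x y : is_csh n x -> is_csh n y -> csh_le n x y -> ~ csh_le n y x ->
  exists i j k, [/\ (i <= n)%N, (j <= n)%N, (k <= n)%N, y i j k < x i j k &
     is_csh n (dec1 x i j k)].
Proof.
move=> [Hbx Hdx] [Hby Hdy] Hle Hnle.
have [i [j [k [iN jN kN yx Hmax]]]] := exists_max_pt Hnle.
exists i, j, k; split => //.
have i0 : (0 < i)%N.
  case: i iN yx Hmax => // iN yx _; have [[_ _ h1] _] := Hbx j k jN kN.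
  have [[_ _ h2] _] := Hby j k jN kN; by rewrite h1 h2 ltxx in yx.
have iN' : (i < n)%N.
  rewrite ltn_neqAle iN andbT; apply/eqP => e; subst i.
  have [_ [_ _ h1]] := Hbx j k jN kN; have [_ [_ _ h2]] := Hby j k jN kN; by rewrite h1 h2 ltxx in yx.
have j0 : (0 < j)%N.
  case: j jN yx Hmax => // jN yx _; have [[_ h1 _] _] := Hbx i k iN kN.
  have [[_ h2 _] _] := Hby i k iN kN; by rewrite h1 h2 ltxx in yx.
have jN' : (j < n)%N.
  rewrite ltn_neqAle jN andbT; apply/eqP => e; subst j.
  have [_ [_ h1 _]] := Hbx i k iN kN; have [_ [_ h2 _]] := Hby i k iN kN; by rewrite h1 h2 ltxx in yx.
have k0 : (0 < k)%N.
  case: k kN yx Hmax => // kN yx _; have [[h1 _ _] _] := Hbx i j iN jN.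
  have [[h2 _ _] _] := Hby i j iN jN; by rewrite h1 h2 ltxx in yx.
have kN' : (k < n)%N.
  rewrite ltn_neqAle kN andbT; apply/eqP => e; subst k.
  have [_ [h1 _ _]] := Hbx i j iN jN; have [_ [h2 _ _]] := Hby i j iN jN; by rewrite h1 h2 ltxx in yx.
split.
  move=> a b aN bN; have [[h1 h2 h3] [h4 h5 h6]] := Hbx a b aN bN.
  rewrite /dec1; split; split.
  - by case: ifP => [|_]; [eqs; lia|].
  - by case: ifP => [|_]; [eqs; lia|].
  - by case: ifP => [|_]; [eqs; lia|].
  - by case: ifP => [|_]; [eqs; lia|].
  - by case: ifP => [|_]; [eqs; lia|].
  - by case: ifP => [|_]; [eqs; lia|].
move=> a b c aN bN /andP[c1 cN] /=.
have c1N : (c.-1 <= n)%N by lia.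
have [hx1 hx2 hx3] := Hdx a b c aN bN ltac:(lia).
have [hy1 hy2 hy3] := Hdy a b c aN bN ltac:(lia).
rewrite /dec1; split.
- apply: (@gen n a b (x a b c) (x a b c.-1) (y a b c) (y a b c.-1) (a * b * c)%N%:Z (a * b * c.-1)%N%:Z) => //.
  + by apply: Hle.
  + by apply: Hle.
  + nia.
  + by case/orP; eqs; rewrite ?i0 ?iN' ?j0 ?jN'.
  + by apply/negP => /andP[/and3P[_ _ /eqP e1] /and3P[_ _ /eqP e2]]; lia.
  + by eqs; split => // h; apply: Hmax.
  + by eqs; split => // h; apply: Hmax.
- apply: (@gen n a b (x a c b) (x a c.-1 b) (y a c b) (y a c.-1 b) (a * c * b)%N%:Z (a * c.-1 * b)%N%:Z) => //.
  + by apply: Hle.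
  + by apply: Hle.
  + nia.
  + by case/orP; eqs; rewrite ?i0 ?iN' ?k0 ?kN'.
  + by apply/negP => /andP[/and3P[_ /eqP e1 _] /and3P[_ /eqP e2 _]]; lia.
  + by eqs; split => // h; apply: Hmax.
  + by eqs; split => // h; apply: Hmax.
- apply: (@gen n a b (x c a b) (x c.-1 a b) (y c a b) (y c.-1 a b) (c * a * b)%N%:Z (c.-1 * a * b)%N%:Z) => //.
  + by apply: Hle.
  + by apply: Hle.
  + nia.
  + by case/orP; eqs; rewrite ?j0 ?jN' ?k0 ?kN'.
  + by apply/negP => /andP[/and3P[/eqP e1 _ _] /and3P[/eqP e2 _ _]]; lia.
  + by eqs; split => // h; apply: Hmax.
  + by eqs; split => // h; apply: Hmax.
Qed.

Definition sumR n (C : hmat) : int :=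
  \sum_(0 <= i < n.+1) \sum_(0 <= j < n.+1) \sum_(0 <= k < n.+1) C i j k.

Lemma sum_le n x y : csh_le n x y -> sumR n y <= sumR n x.
Proof.
move=> H; rewrite /sumR; apply: ler_sum_nat => i /andP[_ iN].
apply: ler_sum_nat => j /andP[_ jN]; apply: ler_sum_nat => k /andP[_ kN]; apply: H; lia.
Qed.

Lemma le_sum_term (F : nat -> int) m i0 : (i0 < m)%N -> (forall i, (i < m)%N -> 0 <= F i) ->
  F i0 <= \sum_(0 <= i < m) F i.
Proof.
move=> i0m H; rewrite (bigD1_seq i0) ?iota_uniq ?mem_iota //=; last by lia.
rewrite lerDl big_seq_cond; apply: sumr_ge0 => i /andP[+ _]; rewrite mem_iota => /andP[_ ?]; apply: H; lia.
Qed.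

Lemma sum_ge0_nat (F : nat -> int) m : (forall i, (i < m)%N -> 0 <= F i) ->
  0 <= \sum_(0 <= i < m) F i.
Proof.
move=> H; rewrite big_seq; apply: sumr_ge0 => i; rewrite mem_index_iota => /andP[_ ?]; exact: H.
Qed.

Lemma sum_lt n x y : csh_lt n x y -> sumR n y < sumR n x.
Proof.
move=> [Hle Hn]; have [i [j [k [iN jN kN yx]]]] := exists_gt Hn.
rewrite -subr_gt0 /sumR -sumrB.
have Hk : forall a b c, (a <= n)%N -> (b <= n)%N -> (c <= n)%N -> 0 <= x a b c - y a b c.
  by move=> a b c aN bN cN; rewrite subr_ge0; apply: Hle.
apply: (lt_le_trans _ (le_sum_term (i0 := i) _ _)); last 2 first.
- by lia.
- move=> a aN; rewrite -sumrB; apply: sum_ge0_nat => b bN; rewrite -sumrB; apply: sum_ge0_nat => c cN.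
  apply: Hk; lia.
rewrite -sumrB; apply: (lt_le_trans _ (le_sum_term (i0 := j) _ _)); last 2 first.
- by lia.
- move=> b bN; rewrite -sumrB; apply: sum_ge0_nat => c cN.
  apply: Hk; lia.
rewrite -sumrB; apply: (lt_le_trans _ (le_sum_term (i0 := k) _ _)); last 2 first.
- by lia.
- by move=> c cN; apply: Hk; lia.
by rewrite subr_gt0.
Qed.

Lemma sum_eq n x y : csh_eq n x y -> sumR n x = sumR n y.
Proof. by move=> [h1 h2]; apply: le_anti; rewrite !sum_le. Qed.

Lemma big_delta (G : nat -> int) m i : (i < m)%N ->
  \sum_(0 <= a < m) ((a == i)%:R * G a) = G i.
Proof.
move=> im; rewrite (bigD1_seq i) ?iota_uniq ?mem_iota //=; last by lia.
rewrite eqxx mul1r big1 ?addr0 // => a /negbTE ->; by rewrite mul0r.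
Qed.

Lemma big_delta1 m i : (i < m)%N -> \sum_(0 <= a < m) ((a == i)%:R : int) = 1.
Proof.
move=> im; rewrite (bigD1_seq i) ?iota_uniq ?mem_iota //=; last by lia.
by rewrite eqxx big1 ?addr0 // => a /negbTE ->.
Qed.

Lemma sum_dec1 n x i j k : (i <= n)%N -> (j <= n)%N -> (k <= n)%N ->
  sumR n (dec1 x i j k) = sumR n x - 1.
Proof.
move=> iN jN kN.
have E : forall a b c, dec1 x i j k a b c = x a b c - (a == i)%:R * ((b == j)%:R * (c == k)%:R).
  move=> a b c; rewrite /dec1.
  by case: (a == i); case: (b == j); case: (c == k); rewrite /= ?mul0r ?mulr0 ?subr0 ?mul1r.
rewrite /sumR.
under eq_bigr do under eq_bigr do under eq_bigr do rewrite E.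
rewrite (eq_bigr (fun a => \sum_(0 <= b < n.+1) \sum_(0 <= c < n.+1) x a b c -
   (a == i)%:R * ((\sum_(0 <= b < n.+1) ((b == j)%:R * ((\sum_(0 <= c < n.+1) ((c == k)%:R : int))))))));
  last first.
  move=> a _.
  rewrite (eq_bigr (fun b => \sum_(0 <= c < n.+1) x a b c - (a == i)%:R * ((b == j)%:R * \sum_(0 <= c < n.+1) ((c == k)%:R : int)))); last first.
    by move=> b _; rewrite sumrB -!mulr_sumr.
  by rewrite sumrB -mulr_sumr.
rewrite sumrB big_delta ?ltnS // big_delta1 ?ltnS //.
rewrite [X in _ - X = _](eq_bigr (fun a => ((a == i)%:R : int))); last by move=> a _; rewrite mulr1.
by rewrite big_delta1 ?ltnS.
Qed.

Lemma dec1_props n x y i j k : (i <= n)%N -> (j <= n)%N -> (k <= n)%N ->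
  y i j k < x i j k -> csh_le n x y ->
  [/\ csh_le n x (dec1 x i j k), csh_le n (dec1 x i j k) y & csh_lt n x (dec1 x i j k)].
Proof.
move=> iN jN kN yx Hle.
have h1 : csh_le n x (dec1 x i j k).
  by move=> a b c _ _ _; rewrite /dec1; case: ifP => _ //; rewrite gerDl.
split => //.
- move=> a b c aN bN cN; rewrite /dec1; case: ifP => [|_]; last exact: Hle.
  by move=> /and3P[/eqP -> /eqP -> /eqP ->]; rewrite lerBrDr; move: yx; lia.
- split => // H; have := H i j k iN jN kN; rewrite /dec1 !eqxx /=; lia.
Qed.

Lemma cover n u v : is_csh n u -> is_csh n v -> csh_lt n u v ->
  ~ (exists z, is_csh n z /\ csh_lt n u z /\ csh_lt n z v) -> sumR n v = sumR n u - 1.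
Proof.
move=> cu cv [Hle Hnle] Hno.
have [i [j [k [iN jN kN yx cz]]]] := step cu cv Hle Hnle.
have [h1 h2 h3] := dec1_props iN jN kN yx Hle.
have h4 : csh_le n v (dec1 u i j k).
  apply: NNPP => h; apply: Hno; exists (dec1 u i j k); split => //.
rewrite -(sum_dec1 u iN jN kN); apply: sum_eq; split => //.
Qed.

Lemma chain_sum n M C s : maximal_chain n M C s ->
  (chain_length s)%:Z = sumR n M - sumR n C.
Proof.
case: s => [|x t] //= [hM hC hcsh hcov].
have key : forall m, (m < (size t).+1)%N -> sumR n (nth x (x :: t) m) = sumR n x - m%:Z.
  elim=> [|m IH] hm; first by rewrite subr0.
  have [hlt hno] := hcov m hm.
  rewrite (cover (hcsh m ltac:(lia)) (hcsh m.+1 hm) hlt hno) IH; last by lia.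
  lia.
have := key (size t) ltac:(lia).
have -> : nth x (x :: t) (size t) = last x t.
  by rewrite [X in nth _ _ X](_ : size t = (size (x :: t)).-1) // nth_last.
rewrite /chain_length /= (sum_eq hC) (sum_eq hM) => e; lia.
Qed.

Lemma ex_chain n C : is_csh n C -> forall N x, is_csh n x -> csh_le n x C ->
  sumR n x - sumR n C = N%:Z ->
  exists t, [/\ csh_eq n (last x t) C,
     (forall m, (m < size (x :: t))%N -> is_csh n (nth x (x :: t) m)) &
     (forall m, (m.+1 < size (x :: t))%N ->
        csh_lt n (nth x (x :: t) m) (nth x (x :: t) m.+1) /\
        ~ (exists z, is_csh n z /\ csh_lt n (nth x (x :: t) m) z /\
                     csh_lt n z (nth x (x :: t) m.+1)))].
Proof.
move=> cC N; elim: N => [|N IH] x cx hle hN.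
- exists [::]; split => //=.
  + split => //; apply: NNPP => h; have := sum_lt (conj hle h); lia.
  + by case.
- case: (classic (csh_le n C x)) => hCx.
    by have := sum_eq (conj hle hCx); lia.
  have [i [j [k [iN jN kN yx cz]]]] := step cx cC hle hCx.
  have [h1 h2 h3] := dec1_props iN jN kN yx hle.
  have hz : sumR n (dec1 x i j k) - sumR n C = N%:Z by rewrite sum_dec1 //; lia.
  have [t [e1 e2 e3]] := IH _ cz h2 hz.
  exists (dec1 x i j k :: t); split => //.
  + case=> [|m] hm //=.
    rewrite (set_nth_default (dec1 x i j k)); last by [].
    exact: e2.
  + case=> [|m] hm.
      split => //= -[w [cw [l1 l2]]].
      have := sum_lt l1; have := sum_lt l2; rewrite sum_dec1 //.
      move=> a b; lia.
    have E1 : nth x (x :: dec1 x i j k :: t) m.+1 = nth (dec1 x i j k) (dec1 x i j k :: t) m.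
      by apply: set_nth_default; rewrite /= in hm *; lia.
    have E2 : nth x (x :: dec1 x i j k :: t) m.+2 = nth (dec1 x i j k) (dec1 x i j k :: t) m.+1.
      by apply: set_nth_default; rewrite /= in hm *; lia.
    rewrite E1 E2; apply: e3; rewrite /= in hm *; lia.
Qed.

Lemma sum_zero_nat (F : nat -> int) m : (forall i, (i < m)%N -> F i = 0) -> \sum_(0 <= i < m) F i = 0.
Proof.
move=> H; rewrite big_seq big1 // => i; rewrite mem_index_iota => /andP[_ ?]; exact: H.
Qed.

Lemma sum0_split (F : nat -> rat) n : F 0%N = 0 -> \sum_(0 <= i < n.+1) F i = \sum_(1 <= i < n.+1) F i.
Proof. by move=> h; rewrite big_ltn // h add0r. Qed.

Lemma sumR_conv n D :
  (forall a b, (a <= n)%N -> (b <= n)%N -> [/\ D a b 0%N = 0, D a 0%N b = 0 & D 0%N a b = 0]) ->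
  ((sumR n D)%:~R : rat) =
  \sum_(1 <= i < n.+1) \sum_(1 <= j < n.+1) \sum_(1 <= k < n.+1) ((D i j k)%:~R : rat).
Proof.
move=> HD; rewrite /sumR intr_sum_nat sum0_split; last first.
  rewrite sum_zero_nat // => j jN; rewrite sum_zero_nat // => k kN.
  by have [_ _ ->] := HD j k ltac:(lia) ltac:(lia).
apply: eq_big_nat => i /andP[_ iN]; rewrite intr_sum_nat sum0_split; last first.
  rewrite sum_zero_nat // => k kN.
  by have [_ -> _] := HD i k ltac:(lia) ltac:(lia).
apply: eq_big_nat => j /andP[_ jN]; rewrite intr_sum_nat sum0_split //.
by have [-> _ _] := HD i j ltac:(lia) ltac:(lia).
Qed.

Unset Implicit Arguments.

Theorem mainTheorem11 (n : nat) (C : hmat) :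
  is_csh n C ->
  (exists s : seq hmat, maximal_chain n (Mmin n) C s) /\
  (forall s : seq hmat, maximal_chain n (Mmin n) C s ->
     (chain_length s)%:Q = rank_formula n C).
Proof.
move=> cC; split.
  have cM := Mmin_csh n.
  have hle := csh_le_M cC.
  have hpos : 0 <= sumR n (Mmin n) - sumR n C by rewrite subr_ge0; apply: sum_le.
  have [t [e1 e2 e3]] := ex_chain cC cM hle (N := `|sumR n (Mmin n) - sumR n C|%N) (esym (gez0_abs hpos)).
  exists (Mmin n :: t); split => //.
  by split => ? ? ? _ _ _.
move=> s hs; have := chain_sum hs => e.
have -> : (chain_length s)%:Q = ((sumR n (Mmin n) - sumR n C)%:~R : rat) by rewrite -e.
rewrite intrB.
have [bM _] := Mmin_csh n; have [bC _] := cC.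
have zC : forall a b, (a <= n)%N -> (b <= n)%N -> [/\ C a b 0%N = 0, C a 0%N b = 0 & C 0%N a b = 0].
  by move=> a b aN bN; have [h _] := bC a b aN bN.
have zM : forall a b, (a <= n)%N -> (b <= n)%N -> [/\ Mmin n a b 0%N = 0, Mmin n a 0%N b = 0 & Mmin n 0%N a b = 0].
  by move=> a b aN bN; have [h _] := bM a b aN bN.
rewrite (sumR_conv zC) (sumR_conv zM).
rewrite sumM -(P3 cC).
by [].
Qed.
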